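(* Fix $x_0$, $\tau\in(0,1)$, $v\in B(0,\rho_{\max})$. There exist, for each $i\in\{2,\dots,T\}$, a finite set $\mathcal{L}_i$ of sequences of non-negative integers of length $i-1$ and finite positive constants $\beta_i^{(j_1,\dots,j_{i-1})}(x_0)$, depending on $x_0$ and $(j_1,\dots,j_{i-1})$ but not on $\epsilon$, the perturbed control $u^\epsilon$, or the observations, such that for every nominal control $u\in U$ left continuous at $\tau$, every sequence of observations $(y_1,\dots,y_T)$, every $\epsilon\in[0,\tau)$, every $i\in\{2,\dots,T\}$ and every $t\in[i-1,i]$, $$\|\Psi_i^\epsilon(t)\|_2\le\sum_{(j_1,\dots,j_{i-1})\in\mathcal{L}_i}\beta_i^{(j_1,\dots,j_{i-1})}(x_0)\prod_{m=1}^{i-1}\|y_m\|_2^{j_m}.$$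
   Context: Fix positive integers $T,m,n_x,n_y$ and $\rho_{\max}\in(0,\infty)$; $B(0,\rho_{\max})$ is the closed Euclidean ball of radius $\rho_{\max}$ in $\mathbb{R}^m$; $U$ is the set of piecewise continuous $u:[0,T]\to\mathbb{R}^m$ with $\|u(t)\|_2\le\rho_{\max}$ for all $t$. $f:\mathbb{R}^{n_x}\times\mathbb{R}^m\to\mathbb{R}^{n_x}$ is continuously differentiable and there is $K_1\in[1,\infty)$ with $\|f(x',u')-f(x'',u'')\|_2\le K_1(\|x'-x''\|_2+\|u'-u''\|_2)$ for all $x',x''$ and $u',u''\in B(0,\rho_{\max})$. $g:\mathbb{R}^{n_x}\times\mathbb{R}^{n_y}\to\mathbb{R}^{n_x}$ is continuous and differentiable in its first argument, and there are $K_2,\dots,K_5\ge0$ and positive integers $L_1,L_2$ such that for all $x,y$ both $\|g(x,y)\|_2$ and $\|\frac{\partial}{\partial x}g(x,y)\|_2$ are at most $K_2+K_3\|x\|_2^{L_1}+K_4\|y\|_2^{L_2}+K_5\|x\|_2^{L_1}\|y\|_2^{L_2}$. For a control $w\in U$ the hybrid trajectory from $x_0$ is: $x_1$ on $[0,1]$ solves $\dot x_1=f(x_1,w)$, $x_1(0)=x_0$; for $i=2,\dots,T$, $x_i$ on $[i-1,i]$ solves $\dot x_i=f(x_i,w)$ with $x_i(i-1)=g(x_{i-1}(i-1),y_{i-1})$. Perturbed control: for $\epsilon\in[0,\tau]$, $u^\epsilon(t)=v$ if $t\in(\tau-\epsilon,\tau]$ and $u^\epsilon(t)=u(t)$ otherwise;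 $x_i^\epsilon$ are the modes of the trajectory under $u^\epsilon$. For $\epsilon\in[0,\tau)$, $\Psi_1^\epsilon$ is the solution on $[\tau-\epsilon,1]$ of $\dot\Psi_1^\epsilon=\frac{\partial}{\partial x}f(x_1^\epsilon,u^\epsilon)\Psi_1^\epsilon$ with $\Psi_1^\epsilon(\tau-\epsilon)=f(x_1^\epsilon(\tau-\epsilon),v)-f(x_1^\epsilon(\tau-\epsilon),u^\epsilon(\tau-\epsilon))$, and for $i\ge2$, $\Psi_i^\epsilon$ is the solution on $[i-1,i]$ of $\dot\Psi_i^\epsilon=\frac{\partial}{\partial x}f(x_i^\epsilon,u^\epsilon)\Psi_i^\epsilon$ with $\Psi_i^\epsilon(i-1)=\frac{\partial}{\partial x}g(x_{i-1}^\epsilon(i-1),y_{i-1})\Psi_{i-1}^\epsilon(i-1)$. (These are the pieces of the right derivative $\frac{\partial_+}{\partial\epsilon}x^\epsilon(t)$.) *)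

(* Defs.v *)
From HB Require Import structures.
From mathcomp Require Import all_boot all_order all_algebra.
From mathcomp Require Import all_classical all_reals all_analysis.
Set Implicit Arguments. Unset Strict Implicit. Unset Printing Implicit Defensive.
Import Order.TTheory GRing.Theory Num.Theory.
Import numFieldNormedType.Exports.
Local Open Scope classical_set_scope.
Local Open Scope ring_scope.

Definition norm2 {R : realType} {n : nat} (v : 'cV[R]_n) : R :=
  Num.sqrt (\sum_(i < n) (v i 0) ^+ 2).

Definition piecewise_continuous {R : realType} {n : nat}
    (a b : R) (u : R -> 'cV[R]_n) : Prop :=
  exists s : seq R,
    (forall t, a < t < b -> t \notin s -> {for t, continuous u}) /\
    (forall t, a < t <= b -> exists l : 'cV[R]_n, u x @[x --> t^'-] --> l) /\
    (forall t, a <= t < b -> exists l : 'cV[R]_n, u x @[x --> t^'+] --> l).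

Definition admissible {R : realType} {m : nat} (T : nat) (rho : R)
    (u : R -> 'cV[R]_m) : Prop :=
  piecewise_continuous 0 T%:R u /\
  (forall t, 0 <= t <= T%:R -> norm2 (u t) <= rho).

Definition needle {R : realType} {m : nat} (u : R -> 'cV[R]_m)
    (v : 'cV[R]_m) (tau eps : R) : R -> 'cV[R]_m :=
  fun t => if (tau - eps < t) && (t <= tau) then v else u t.

(* x solves dx/dt = F t (x t) on [a,b] with x a = x0, where F t is
   piecewise continuous in t through the control w: x is continuous on
   [a,b] and differentiable with derivative F t (x t) at every interior
   time where the control w is continuous (i.e. off the finitely many
   switching times of the piecewise continuous control). *)
Definition solves_on {R : realType} {n m : nat} (a b : R)
    (w : R -> 'cV[R]_m) (F : R -> 'cV[R]_n -> 'cV[R]_n)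
    (x0 : 'cV[R]_n) (x : R -> 'cV[R]_n) : Prop :=
  x a = x0 /\
  {within `[a, b], continuous x} /\
  (forall t, a < t < b -> {for t, continuous w} ->
     is_derive t 1 x (F t (x t))).

Definition dx_f {R : realType} {n m : nat}
    (f : 'cV[R]_n * 'cV[R]_m -> 'cV[R]_n) (x : 'cV[R]_n) (u : 'cV[R]_m)
    (d : 'cV[R]_n) : 'cV[R]_n :=
  'd (fun z => f (z, u)) x d.

(* Hybrid trajectory (modes x 1 .. x T) from x0 under control w and
   observations y (y 1 .. y T). *)
Definition hybrid_traj {R : realType} {nx m ny : nat} (T : nat)
    (f : 'cV[R]_nx * 'cV[R]_m -> 'cV[R]_nx)
    (g : 'cV[R]_nx * 'cV[R]_ny -> 'cV[R]_nx)
    (x0 : 'cV[R]_nx) (w : R -> 'cV[R]_m) (y : nat -> 'cV[R]_ny)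
    (x : nat -> R -> 'cV[R]_nx) : Prop :=
  solves_on 0 1 w (fun t z => f (z, w t)) x0 (x 1%N) /\
  (forall i, (2 <= i <= T)%N ->
     solves_on (i.-1)%:R i%:R w (fun t z => f (z, w t))
       (g (x i.-1 (i.-1)%:R, y i.-1)) (x i)).

(* The pieces Psi 1 .. Psi T of the right derivative of x^eps, given the
   perturbed trajectory xe (under ue = needle u v tau eps). *)
Definition psi_pieces {R : realType} {nx m ny : nat} (T : nat)
    (f : 'cV[R]_nx * 'cV[R]_m -> 'cV[R]_nx)
    (g : 'cV[R]_nx * 'cV[R]_ny -> 'cV[R]_nx)
    (ue : R -> 'cV[R]_m) (v : 'cV[R]_m) (tau eps : R)
    (y : nat -> 'cV[R]_ny)
    (xe : nat -> R -> 'cV[R]_nx) (Psi : nat -> R -> 'cV[R]_nx) : Prop :=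
  solves_on (tau - eps) 1 ue (fun t z => dx_f f (xe 1%N t) (ue t) z)
    (f (xe 1%N (tau - eps), v) - f (xe 1%N (tau - eps), ue (tau - eps)))
    (Psi 1%N) /\
  (forall i, (2 <= i <= T)%N ->
     solves_on (i.-1)%:R i%:R ue (fun t z => dx_f f (xe i t) (ue t) z)
       ('d (fun z => g (z, y i.-1)) (xe i.-1 (i.-1)%:R)
           (Psi i.-1 (i.-1)%:R))
       (Psi i)).

(* Main.v *)
Require Import Defs.
From HB Require Import structures.
From mathcomp Require Import all_boot all_order all_algebra.
From mathcomp Require Import all_classical all_reals all_analysis.
From mathcomp Require Import ring lra.
Import Order.TTheory GRing.Theory Num.Theory.
Import numFieldNormedType.Exports.
Local Open Scope classical_set_scope.
Local Open Scope ring_scope.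



Section N2.
Context {R : realType} {n : nat}.
Implicit Types v w : 'cV[R]_n.

Definition sq v : R := \sum_(i < n) (v i 0) ^+ 2.

Lemma sq_ge0 v : 0 <= sq v.
Proof. by apply: sumr_ge0 => i _; rewrite sqr_ge0. Qed.

Lemma norm2_ge0 v : 0 <= norm2 v.
Proof. exact: sqrtr_ge0. Qed.

Lemma norm2_sq v : norm2 v ^+ 2 = sq v.
Proof. by rewrite /norm2 sqr_sqrtr // sq_ge0. Qed.

Lemma norm2_le v c : 0 <= c -> sq v <= c ^+ 2 -> norm2 v <= c.
Proof.
by move=> c0 h; rewrite /norm2 -(ger0_norm c0) -sqrtr_sqr ler_sqrt ?sqr_ge0.
Qed.

Lemma le_norm2 v c : norm2 v <= c -> sq v <= c ^+ 2.
Proof.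
move=> h; rewrite -norm2_sq lerXn2r ?nnegrE ?norm2_ge0 //.
exact: le_trans (norm2_ge0 v) h.
Qed.

Lemma coord_le_norm2 v i : `|v i 0| <= norm2 v.
Proof.
rewrite /norm2 -sqrtr_sqr ler_sqrt ?sq_ge0 //.
rewrite /sq (bigD1 i) //= lerDl; apply: sumr_ge0 => j _; exact: sqr_ge0.
Qed.

Lemma norm2Z (c : R) v : norm2 (c *: v) = `|c| * norm2 v.
Proof.
rewrite /norm2 -sqrtr_sqr -sqrtrM ?sqr_ge0 //; congr Num.sqrt.
by rewrite mulr_sumr; apply: eq_bigr => i _; rewrite !mxE exprMn.
Qed.

Lemma norm2N v : norm2 (- v) = norm2 v.
Proof. by rewrite -scaleN1r norm2Z normrN normr1 mul1r. Qed.

Lemma norm20 : norm2 (0 : 'cV[R]_n) = 0.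
Proof.
by rewrite -(scale0r (0 : 'cV[R]_n)) norm2Z normr0 mul0r.
Qed.

Lemma norm2D v w : norm2 (v + w) <= 2 * (norm2 v + norm2 w).
Proof.
apply: norm2_le; first by rewrite mulr_ge0 // addr_ge0 ?norm2_ge0.
have -> : (2 * (norm2 v + norm2 w)) ^+ 2 =
   2 * (2 * (norm2 v ^+ 2 + norm2 w ^+ 2)) + 8 * (norm2 v * norm2 w) by ring.
have h1 : sq (v + w) <= 2 * (sq v + sq w).
  rewrite /sq -big_split /= mulr_sumr ler_sum // => i _.
  rewrite !mxE.
  have h : 0 <= (v i 0 - w i 0) ^+ 2 by apply: sqr_ge0.
  nra.
apply: (le_trans h1); rewrite -!norm2_sq.
have := norm2_ge0 v; have := norm2_ge0 w; nra.
Qed.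

Lemma sq_continuous : continuous (sq : 'cV[R]_n -> R).
Proof.
rewrite /sq => v.
apply: (@continuous_big R 'I_n +%R 0 predT _ 'cV[R]_n (index_enum 'I_n)
   (fun i (v : 'cV[R]_n) => (v i 0) ^+ 2)).
  exact: add_continuous.
move=> i _ w.
have -> : (fun v : 'cV[R]_n => v i 0 ^+ 2) = (fun v => v i 0 * v i 0).
  by apply/funext => u; rewrite expr2.
have hc := @coord_continuous R n 1 i 0 w.
exact: (cvgM hc hc).
Qed.

Lemma norm2_continuous : continuous (norm2 : 'cV[R]_n -> R).
Proof.
move=> v; apply: continuous_comp; first exact: sq_continuous.
exact: sqrt_continuous.
Qed.

End N2.


Lemma diff_lip_bound {R : realType} {n : nat} (h : 'cV[R]_n -> 'cV[R]_n)
  (x d : 'cV[R]_n) (K : R) :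
  differentiable h x ->
  (forall a b, norm2 (h a - h b) <= K * norm2 (a - b)) ->
  norm2 ('d h x d) <= K * norm2 d.
Proof.
move=> hx lip.
rewrite -deriveE //.
have hd : derivable h x d by exact: diff_derivable.
have hc := @continuous_cvg _ _ _ _ _ _ norm2 _ (norm2_continuous _) hd.
have := @closed_cvg _ _ _ _ _ [set z : R | z <= K * norm2 d] (@closed_le R (K * norm2 d)) _ _ (hc _).
apply.
near=> r.
have r0 : r != 0 by near: r; exact: nbhs_dnbhs_neq.
rewrite /= norm2Z.
have := lip (r *: d + x) x.
rewrite addrK norm2Z => hl.
rewrite normfV ler_pdivrMl ?normr_gt0 //.
by rewrite mulrCA.
Unshelve. all: by end_near. Qed.


Lemma cont_sub {R : realType} (psi : R -> R) (a b c d : R) :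
  a <= c -> d <= b -> {within `[a, b], continuous psi} ->
  {within `[c, d], continuous psi}.
Proof.
move=> ac db cont; apply: continuous_subspaceW cont.
by apply: subset_itv; rewrite bnd_simp.
Qed.

Lemma nincr_fin {R : realType} (psi : R -> R) (s : seq R) :
  forall a b, a <= b -> {within `[a, b], continuous psi} ->
  (forall t, a < t < b -> t \notin s -> derivable psi t 1 /\ derive1 psi t <= 0) ->
  forall t, a <= t <= b -> psi t <= psi a.
Proof.
elim: s => [|p s IH] a b ab cont hd t /andP[a_t tb].
  apply: (ler0_derive1_nincr (a:=a) (b:=b)) => //.
  - by move=> x; rewrite in_itv /= => /hd => /(_ isT) [].
  - by move=> x; rewrite in_itv /= => /hd => /(_ isT) [].
case: (boolP ((a < p) && (p < b))) => [/andP[ap pb] | hp].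
  have hs : forall c d, a <= c -> d <= b -> c <= d -> (p <= c) || (d <= p) ->
      forall t, c <= t <= d -> psi t <= psi c.
    move=> c d ac db cd hpcd; apply: (IH c d cd); first exact: cont_sub cont.
    move=> x /andP[cx xd] xs; apply: hd.
      by rewrite (le_lt_trans ac cx) (lt_le_trans xd db).
    rewrite in_cons negb_or xs andbT; apply/eqP => xp; move: hpcd.
    by rewrite -xp leNgt cx /= leNgt xd.
  have h1 : forall t, a <= t <= p -> psi t <= psi a.
    by apply: hs; rewrite ?lexx ?orbT ?(ltW ap) ?(ltW pb).
  have h2 : forall t, p <= t <= b -> psi t <= psi p.
    by apply: hs; rewrite ?lexx ?orbT ?(ltW ap) ?(ltW pb).
  case: (lerP t p) => tp.
    by apply: h1; rewrite a_t tp.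
  apply: (le_trans (h2 t _) (h1 p _)).
    by rewrite (ltW tp) tb.
  by rewrite lexx (ltW ap).
apply: (IH a b ab cont) => //; last by rewrite a_t tb.
move=> x /andP[ax xb] xs; apply: hd; first by rewrite ax xb.
rewrite in_cons negb_or xs andbT; apply/eqP => xp; move: hp.
by rewrite -xp ax xb.
Qed.


Lemma sq_derive {R : realType} {n : nat} (x : R -> 'cV[R]_n) (D : 'cV[R]_n) (t : R) :
  is_derive t 1 x D ->
  is_derive t 1 (fun s => sq (x s)) (\sum_(i < n) 2 * (x t i 0 * D i 0)).
Proof.
move=> H.
have dx : derivable x t 1 by case: H.
have hc : forall i, is_derive t 1 (fun s => x s i 0) (D i 0).
  move=> i; have di := (derivable_mxP x t 1).1 dx i 0.
  split => //.
  have := derive_mx dx; rewrite (@derive_val _ _ _ _ _ _ _ H).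
  by move/(congr1 (fun M : 'cV[R]_n => M i 0)); rewrite mxE => ->.
have -> : (fun s => sq (x s)) = \sum_(i < n) (fun s => x s i 0 * x s i 0).
  by apply/funext => s; rewrite fct_sumE /sq; apply: eq_bigr => i _; rewrite expr2.
apply: is_derive_eq.
by apply: eq_bigr => i _; rewrite -mulr2n mulr_natl mulr2n.
Qed.

Lemma gronwall {R : realType} {n : nat} (x D : R -> 'cV[R]_n) (a b al be : R)
  (s : seq R) :
  a <= b -> b <= a + 1 -> 0 <= al -> 0 <= be ->
  {within `[a, b], continuous x} ->
  (forall t, a < t < b -> t \notin s -> is_derive t 1 x (D t)) ->
  (forall t, a < t < b -> t \notin s -> norm2 (D t) <= al + be * norm2 (x t)) ->
  forall t, a <= t <= b ->
    norm2 (x t) <= expR (1 + 2 * be ^+ 2) * (norm2 (x a) + 2 * al).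
Proof.
move=> ab ba1 al0 be0 cont hder hbd.
set K := 1 + 2 * be ^+ 2.
set A := 2 * al ^+ 2.
have K1 : 1 <= K by rewrite /K lerDl mulr_ge0 // sqr_ge0.
have A0 : 0 <= A by rewrite /A mulr_ge0 // sqr_ge0.
pose e := fun t : R => expR (- K * t).
have de : forall t : R, is_derive t 1 e (- K * e t).
  move=> t; rewrite /e.
  have h1 : is_derive t 1 (fun u : R => - K * u) (- K).
    have H := is_deriveZ (- K) (is_derive_id t (1 : R)).
    have -> : (fun u : R => - K * u) = (- K) \*: id by apply/funext.
    by apply: is_derive_eq H _; rewrite /GRing.scale /= mulr1.
  have := is_derive1_comp (f := expR) (is_derive_expR (- K * t)) h1.
  by rewrite mulrC.
pose psi := fun t => (sq (x t) + A) * e t.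
have key : forall t, a <= t <= b -> psi t <= psi a.
  apply: (@nincr_fin _ psi s a b ab).
  - move=> t; apply: cvgM.
      apply: cvgD; last exact: cvg_cst.
      exact: (@continuous_cvg _ _ _ _ _ _ sq _ (sq_continuous _) (cont t)).
    have ce : continuous e.
      move=> u; apply/differentiable_continuous/derivable1_diffP.
      by case: (de u).
    exact: (@continuous_subspaceT _ _ `[a, b] e ce t).
  - move=> t tab ts.
    have hx := hder t tab ts.
    have hs := sq_derive _ _ _ hx.
    have hf : is_derive t 1 (fun u => sq (x u) + A)
        (\sum_(i < n) 2 * (x t i 0 * D t i 0)).
      have := is_deriveD hs (is_derive_cst A t 1).
      by rewrite addr0.
    have hp := is_deriveM hf (de t).
    have -> : psi = (fun u => sq (x u) + A) * e by apply/funext.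
    split; first by case: hp.
    rewrite derive1E (@derive_val _ _ _ _ _ _ _ hp).
    set S := \sum_(i < n) _.
    have hS : S <= sq (x t) + sq (D t).
      rewrite /S /sq -big_split ler_sum // => i _.
      rewrite /=; have := sqr_ge0 (x t i 0 - D t i 0); nra.
    have hD : sq (D t) <= A + 2 * be ^+ 2 * sq (x t).
      rewrite -norm2_sq -(norm2_sq (x t)) /A.
      have := hbd t tab ts; have := norm2_ge0 (D t); have := norm2_ge0 (x t).
      move=> h1 h2 h3.
      have h4 : 0 <= (al - be * norm2 (x t)) ^+ 2 by apply: sqr_ge0.
      have h5 : 0 <= (al + be * norm2 (x t) - norm2 (D t)) * (al + be * norm2 (x t) + norm2 (D t)).
        apply: mulr_ge0; first by lra.
        have : 0 <= be * norm2 (x t) by apply: mulr_ge0.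
        lra.
      nra.
    have E0 : 0 < e t by apply: expR_gt0.
    rewrite /GRing.scale /=.
    have -> : (sq (x t) + A) * (- K * e t) + e t * S =
       e t * (S - K * (sq (x t) + A)) by ring.
    rewrite pmulr_rle0 //.
    have : S <= A + K * sq (x t) by rewrite /K; lra.
    have := sq_ge0 (x t); nra.
move=> t tab; have kt := key t tab.
move: tab => /andP[a_t tb].
rewrite /psi /e in kt.
have eq : expR (- K * a) = expR (- K * t) * expR (K * (t - a)).
  by rewrite -expRD; congr expR; ring.
rewrite eq mulrA in kt.
have Et := expR_gt0 (- K * t).
have k2 : sq (x t) + A <= (sq (x a) + A) * expR (K * (t - a)).
  rewrite -(ler_pM2r Et); apply: le_trans kt _; rewrite mulrAC.
  by [].
have hM : expR (K * (t - a)) <= expR K.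
  rewrite ler_expR; have : t - a <= 1 by lra.
  have : 0 <= t - a by lra.
  nra.
have E1 : 1 <= expR K.
  have := expR_ge1Dx K; lra.
have xa0 := norm2_ge0 (x a).
apply: norm2_le.
  by apply: mulr_ge0; [lra| lra].
have h3 : sq (x t) <= (sq (x a) + A) * expR K.
  have : 0 <= sq (x a) + A by have := sq_ge0 (x a); lra.
  nra.
rewrite -norm2_sq /A in h3.
have h4 : 0 <= norm2 (x a) * al by apply: mulr_ge0.
have h5 : 0 <= (norm2 (x a) + 2 * al) ^+ 2 by apply: sqr_ge0.
have h6 : norm2 (x a) ^+ 2 + 2 * al ^+ 2 <= (norm2 (x a) + 2 * al) ^+ 2.
  have : 0 <= al ^+ 2 by apply: sqr_ge0.
  nra.
rewrite -(norm2_sq (x t)); apply: (le_trans h3); rewrite exprMn.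
set E := expR K; set P := (norm2 (x a) + 2 * al) ^+ 2.
apply: (@le_trans _ _ (P * E)).
  apply: ler_wpM2r; first by rewrite /E; lra.
  by rewrite /P -norm2_sq.
rewrite mulrC; apply: ler_wpM2r; first by rewrite /P; lra.
rewrite /E; nra.
Qed.


Fixpoint Lseq (n D : nat) : seq (seq nat) :=
  if n is n'.+1 then [seq 0%N :: j | j <- Lseq n' D] ++ [seq D :: j | j <- Lseq n' D]
  else [:: [::]].

Lemma Lseq_size n D j : j \in Lseq n D -> size j = n.
Proof.
elim: n j => [|n IH] j /=; first by rewrite inE => /eqP ->.
by rewrite mem_cat => /orP[] /mapP[k /IH hk ->] /=; rewrite hk.
Qed.

Lemma Lseq_uniq n D : uniq (Lseq n D.+1).
Proof.
elim: n => [|n IH] //=.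
rewrite cat_uniq !map_inj_uniq // ?IH ?andbT /=; try by move=> a b [].
apply/hasPn => z /mapP[k _ ->]; apply/negP => /mapP[l _] [] //.
Qed.

Lemma Lseq_sum {R : realType} n D (r : nat -> R) :
  \prod_(k < n) (1 + r k ^+ D) =
  \sum_(j <- Lseq n D) \prod_(k < n) r k ^+ nth 0%N j k.
Proof.
elim: n r => [|n IH] r /=.
  by rewrite big_ord0 big_seq1 big_ord0.
rewrite big_ord_recl.
have -> : \prod_(i < n) (1 + r (lift ord0 i) ^+ D) = \prod_(i < n) (1 + r i.+1 ^+ D).
  by apply: eq_bigr.
rewrite (IH (fun k => r k.+1)) big_cat /= !big_map.
rewrite mulrDl mul1r mulr_sumr; congr (_ + _); apply: eq_bigr => j _.
  by rewrite big_ord_recl /= expr0 mul1r; apply: eq_bigr.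
by rewrite big_ord_recl /=; congr (_ * _); apply: eq_bigr.
Qed.

Lemma onep_le {R : realType} (r : R) D : 0 <= r -> (1 + r) ^+ D <= 2 ^+ D * (1 + r ^+ D).
Proof.
move=> r0; have rD := exprn_ge0 D r0.
have h2 : 0 <= 2 ^+ D :> R by apply: exprn_ge0.
case: (lerP r 1) => r1.
  apply: (@le_trans _ _ (2 ^+ D)).
    by apply: lerXn2r; rewrite ?nnegrE; lra.
  have : 2 ^+ D <= 2 ^+ D * (1 + r ^+ D) :> R by nra.
  by [].
apply: (@le_trans _ _ ((2 * r) ^+ D)).
  by apply: lerXn2r; rewrite ?nnegrE; lra.
rewrite exprMn; nra.
Qed.

Definition Pbd {R : realType} {ny : nat} (y : nat -> 'cV[R]_ny) (k D : nat) : R :=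
  \prod_(j < k) (1 + norm2 (y j.+1)) ^+ D.

Section PbdTh.
Context {R : realType} {ny : nat} (y : nat -> 'cV[R]_ny).

Lemma Pbd_ge1 k D : 1 <= Pbd y k D.
Proof.
rewrite /Pbd; elim/big_ind: _ => //.
  by move=> a b a1 b1; rewrite -[1]mulr1 ler_pM //; lra.
move=> i _; apply: exprn_ege1; have := norm2_ge0 (y i.+1); lra.
Qed.

Lemma Pbd_mono k D D' : (D <= D')%N -> Pbd y k D <= Pbd y k D'.
Proof.
move=> DD; apply: ler_prod => i _; rewrite exprn_ge0 /=; last first.
  by have := norm2_ge0 (y i.+1); lra.
apply: ler_weXn2l => //; have := norm2_ge0 (y i.+1); lra.
Qed.

Lemma PbdX k D m : Pbd y k D ^+ m = Pbd y k (D * m).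
Proof.
by rewrite /Pbd -prodrXl; apply: eq_bigr => i _; rewrite exprM.
Qed.

Lemma PbdS k D : Pbd y k.+1 D = Pbd y k D * (1 + norm2 (y k.+1)) ^+ D.
Proof. by rewrite /Pbd big_ord_recr. Qed.

Lemma Pbd_poly k D :
  Pbd y k D <= 2 ^+ (D * k) *
    \sum_(j <- Lseq k D) \prod_(i < k) norm2 (y i.+1) ^+ nth 0%N j i.
Proof.
rewrite -(Lseq_sum k D (fun i => norm2 (y i.+1))).
have -> : (2 : R) ^+ (D * k) = \prod_(i < k) 2 ^+ D.
  elim: k => [|k IHk]; first by rewrite big_ord0 muln0 expr0.
  by rewrite big_ord_recr /= -IHk -exprD mulnS addnC.
rewrite -big_split /=.
apply: ler_prod => i _; rewrite exprn_ge0 /=; last first.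
  by have := norm2_ge0 (y i.+1); lra.
exact/onep_le/norm2_ge0.
Qed.

End PbdTh.


Lemma needle_cont {R : realType} {m : nat} (u : R -> 'cV[R]_m) v tau eps (t : R) :
  {for t, continuous u} -> t != tau - eps -> t != tau ->
  {for t, continuous (needle u v tau eps)}.
Proof.
move=> hu h1 h2; rewrite /prop_for /continuous_at; move: hu; rewrite /prop_for /continuous_at => hu.
have equ : (forall z, ~~ ((tau - eps < z) && (z <= tau)) -> needle u v tau eps z = u z).
  by move=> z hz; rewrite /needle (negbTE hz).
case: (ltgtP t (tau - eps)) => [lt1|gt1|eq1]; last by rewrite eq1 eqxx in h1.
- have -> : needle u v tau eps t = u t.
    by apply: equ; rewrite negb_and -leNgt ltW.
  apply: (cvg_trans _ hu); apply: near_eq_cvg.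
  near=> z; apply/esym/equ.
  have : z < tau - eps by near: z; exact: lt_nbhsl.
  by move=> zl; rewrite negb_and -leNgt ltW.
case: (ltgtP t tau) => [lt2|gt2|eq2]; last by rewrite eq2 eqxx in h2.
- apply: cvg_near_cst.
  near=> z; rewrite /needle.
  have -> : tau - eps < z by near: z; exact: lt_nbhsr.
  have -> : z <= tau by apply: ltW; near: z; exact: lt_nbhsl.
  by rewrite /needle gt1 (ltW lt2).
- have -> : needle u v tau eps t = u t.
    by apply: equ; rewrite negb_and -ltNge gt2 orbT.
  apply: (cvg_trans _ hu); apply: near_eq_cvg.
  near=> z; apply/esym/equ.
  have : tau < z by near: z; exact: lt_nbhsr.
  by move=> zl; rewrite negb_and -ltNge zl orbT.
Unshelve. all: by end_near. Qed.

Lemma needle_bound {R : realType} {m : nat} (T : nat) (rho : R)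
  (u : R -> 'cV[R]_m) v tau eps (t : R) :
  admissible T rho u -> norm2 v <= rho -> 0 <= t <= T%:R ->
  norm2 (needle u v tau eps t) <= rho.
Proof.
by move=> [_ hu] hv ht; rewrite /needle; case: ifP => _ //; apply: hu.
Qed.


Lemma step_arith {R : realType} (K2 K3 K4 K5 C Q r X : R) (L1 L2 : nat) :
  0 <= K2 -> 0 <= K3 -> 0 <= K4 -> 0 <= K5 -> 0 <= C -> 1 <= Q -> 0 <= r ->
  0 <= X -> X <= C * Q ->
  K2 + K3 * X ^+ L1 + K4 * r ^+ L2 + K5 * X ^+ L1 * r ^+ L2 <=
  (K2 + K3 * C ^+ L1 + K4 + K5 * C ^+ L1) * (Q ^+ L1 * (1 + r) ^+ L2).
Proof.
move=> K20 K30 K40 K50 C0 Q1 r0 X0 XC.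
have A1 : 1 <= Q ^+ L1 by apply: exprn_ege1.
have Bf1 : 1 <= (1 + r) ^+ L2 by apply: exprn_ege1; lra.
move: A1 Bf1; set A := Q ^+ L1; set Bf := (1 + r) ^+ L2 => A1 Bf1.
have ABf : 1 <= A * Bf by rewrite -[1]mulr1; apply: ler_pM; lra.
have CL0 : 0 <= C ^+ L1 by apply: exprn_ge0.
have hp : X ^+ L1 <= C ^+ L1 * A.
  by rewrite /A -exprMn; apply: lerXn2r; rewrite ?nnegrE //; apply: mulr_ge0 => //; lra.
have hq : r ^+ L2 <= Bf by apply: lerXn2r; rewrite ?nnegrE //; lra.
have p0 : 0 <= X ^+ L1 by apply: exprn_ge0.
have q0 : 0 <= r ^+ L2 by apply: exprn_ge0.
have cA0 : 0 <= C ^+ L1 * A by apply: mulr_ge0; lra.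
have t1 : K2 <= K2 * (A * Bf) by rewrite ler_peMr.
have t2 : X ^+ L1 <= C ^+ L1 * A * Bf.
  by apply: le_trans hp _; rewrite ler_peMr.
have t3 : r ^+ L2 <= A * Bf.
  by apply: le_trans hq _; rewrite ler_peMl //; lra.
have t4 : X ^+ L1 * r ^+ L2 <= C ^+ L1 * A * Bf by apply: ler_pM.
have -> : (K2 + K3 * C ^+ L1 + K4 + K5 * C ^+ L1) * (A * Bf) =
   K2 * (A * Bf) + K3 * (C ^+ L1 * A * Bf) + K4 * (A * Bf) + K5 * (C ^+ L1 * A * Bf)
   by ring.
rewrite -[K5 * _ * _]mulrA.
by apply: lerD; [apply: lerD; [apply: lerD|]|]; rewrite // ?ler_wpM2l.
Qed.

Lemma Pbd_step {R : realType} {ny : nat} (y : nat -> 'cV[R]_ny) (i D L1 L2 : nat) :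
  (0 < i)%N ->
  Pbd y i.-1 D ^+ L1 * (1 + norm2 (y i)) ^+ L2 <= Pbd y i (D * L1.+1 + L2) /\
  Pbd y i.-1 D ^+ L1 * Pbd y i.-1 D * (1 + norm2 (y i)) ^+ L2
     <= Pbd y i (D * L1.+1 + L2).
Proof.
move=> ipos.
have r0 := norm2_ge0 (y i).
have eq : Pbd y i (D * L1.+1 + L2) =
    Pbd y i.-1 (D * L1.+1 + L2) * (1 + norm2 (y i)) ^+ (D * L1.+1 + L2).
  by rewrite -{1}(prednK ipos) PbdS prednK.
rewrite eq.
have hB : (1 + norm2 (y i)) ^+ L2 <= (1 + norm2 (y i)) ^+ (D * L1.+1 + L2).
  by apply: ler_weXn2l; [lra | rewrite leq_addl].
have B0 : 0 <= (1 + norm2 (y i)) ^+ L2 by apply: exprn_ge0; lra.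
have Q1 := Pbd_ge1 y i.-1 D.
have hA1 : Pbd y i.-1 D ^+ L1 <= Pbd y i.-1 (D * L1.+1 + L2).
  rewrite PbdX; apply: Pbd_mono.
  by rewrite (leq_trans _ (leq_addr _ _)) // leq_mul2l ltnW ?orbT.
have hA2 : Pbd y i.-1 D ^+ L1 * Pbd y i.-1 D <= Pbd y i.-1 (D * L1.+1 + L2).
  by rewrite -exprSr PbdX; apply: Pbd_mono; rewrite leq_addr.
split; apply: ler_pM => //.
- by apply: exprn_ge0; lra.
- by apply: mulr_ge0; [apply: exprn_ge0|]; lra.
Qed.

Lemma fin_arith {R : realType} (Ex Ep M C alx Q A Bf P' gx dG : R) :
  1 <= Ex -> 1 <= Ep -> 0 <= M -> 0 <= C -> 0 <= alx -> 1 <= A -> 1 <= Bf ->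
  0 <= Q -> A * Bf <= P' -> A * Q * Bf <= P' -> gx <= M * (A * Bf) ->
  dG <= M * (A * Bf) * (C * Q) ->
  Ex * (gx + 2 * alx) <= (Ex * (M + 2 * alx) + Ep * (M * C)) * P' /\
  Ep * (dG + 2 * 0) <= (Ex * (M + 2 * alx) + Ep * (M * C)) * P'.
Proof.
move=> Ex1 Ep1 M0 C0 al0 A1 B1 Q0 PA PB hg hd.
have AB1 : 1 <= A * Bf by rewrite -[1]mulr1; apply: ler_pM; lra.
have P1 : 1 <= P' by apply: le_trans AB1 PA.
have MC0 : 0 <= Ep * (M * C) by apply: mulr_ge0; [lra | exact: mulr_ge0].
have X0 : 0 <= Ex * (M + 2 * alx) by apply: mulr_ge0; lra.
split.
  apply: (@le_trans _ _ (Ex * (M + 2 * alx) * P')); last first.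
    by rewrite mulrDl; have := mulr_ge0 MC0 (le_trans ler01 P1); lra.
  rewrite -mulrA ler_wpM2l //; first lra.
  apply: (@le_trans _ _ ((M + 2 * alx) * (A * Bf))).
    have e : (M + 2 * alx) * (A * Bf) = M * (A * Bf) + 2 * alx * (A * Bf) by ring.
    have h : 2 * alx <= 2 * alx * (A * Bf) by rewrite ler_peMr //; lra.
    lra.
  by apply: ler_wpM2l => //; lra.
apply: (@le_trans _ _ (Ep * (M * C) * P')); last first.
  by rewrite mulrDl; have := mulr_ge0 X0 (le_trans ler01 P1); lra.
rewrite mulr0 addr0 -mulrA ler_wpM2l //; first lra.
apply: (le_trans hd).
have -> : M * (A * Bf) * (C * Q) = M * C * (A * Q * Bf) by ring.
apply: ler_wpM2l => //; exact: mulr_ge0.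
Qed.


Theorem proposition10 (R : realType) (T m nx ny : nat) (rho : R)
  (f : 'cV[R]_nx * 'cV[R]_m -> 'cV[R]_nx)
  (g : 'cV[R]_nx * 'cV[R]_ny -> 'cV[R]_nx)
  (K1 K2 K3 K4 K5 : R) (L1 L2 : nat) :
  (0 < T)%N -> (0 < m)%N -> (0 < nx)%N -> (0 < ny)%N -> 0 < rho ->
  (* f continuously differentiable *)
  (forall p, differentiable f p) ->
  (forall d, continuous (fun p => 'd f p d)) ->
  (* Lipschitz condition, K1 >= 1 *)
  1 <= K1 ->
  (forall x' x'' u' u'', norm2 u' <= rho -> norm2 u'' <= rho ->
     norm2 (f (x', u') - f (x'', u''))
       <= K1 * (norm2 (x' - x'') + norm2 (u' - u''))) ->
  (* g continuous and differentiable in its first argument *)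
  continuous g ->
  (forall x y, differentiable (fun z => g (z, y)) x) ->
  0 <= K2 -> 0 <= K3 -> 0 <= K4 -> 0 <= K5 -> (0 < L1)%N -> (0 < L2)%N ->
  (forall x y, norm2 (g (x, y)) <=
     K2 + K3 * norm2 x ^+ L1 + K4 * norm2 y ^+ L2
        + K5 * norm2 x ^+ L1 * norm2 y ^+ L2) ->
  (* bound on the induced 2-norm of the Jacobian dg/dx *)
  (forall x y d, norm2 ('d (fun z => g (z, y)) x d) <=
     (K2 + K3 * norm2 x ^+ L1 + K4 * norm2 y ^+ L2
        + K5 * norm2 x ^+ L1 * norm2 y ^+ L2) * norm2 d) ->
  forall (x0 : 'cV[R]_nx) (tau : R) (v : 'cV[R]_m),
  0 < tau < 1 -> norm2 v <= rho ->
  exists (L : nat -> seq (seq nat)) (beta : nat -> seq nat -> R),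
    (forall i, (2 <= i <= T)%N ->
       uniq (L i) /\
       (forall j, j \in L i -> size j = i.-1 /\ 0 < beta i j)) /\
    forall (u : R -> 'cV[R]_m),
      admissible T rho u ->
      u t @[t --> tau^'-] --> u tau ->
    forall (y : nat -> 'cV[R]_ny) (eps : R),
      0 <= eps < tau ->
    forall (xe Psi : nat -> R -> 'cV[R]_nx),
      hybrid_traj T f g x0 (needle u v tau eps) y xe ->
      psi_pieces T f g (needle u v tau eps) v tau eps y xe Psi ->
    forall (i : nat) (t : R),
      (2 <= i <= T)%N -> (i.-1)%:R <= t <= i%:R ->
      norm2 (Psi i t) <=
        \sum_(j <- L i) beta i j *
           \prod_(k < i.-1) norm2 (y k.+1) ^+ (nth 0%N j k).
Proof.
move=> T0 m0 nx0 ny0 rho0 fdiff fdcont K1ge1 flip gcont gdiff K20 K30 K40 K50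
  L10 L20 gbd dgbd x0 tau v /andP[tau0 tau1] vrho.
have K10 : 0 <= K1 by lra.
have rho0' : 0 <= rho by lra.
set c0 := norm2 (f (0, 0)).
have c00 : 0 <= c0 by apply: norm2_ge0.
set alx := 2 * c0 + 2 * K1 * rho.
set bex := 2 * K1.
have alx0 : 0 <= alx by rewrite /alx; nra.
have bex0 : 0 <= bex by rewrite /bex; lra.
have fbd : forall x w, norm2 w <= rho -> norm2 (f (x, w)) <= alx + bex * norm2 x.
  move=> x w hw.
  have := norm2D (f (x, w) - f (0, 0)) (f (0, 0)); rewrite subrK => h.
  have := flip x 0 w 0 hw; rewrite norm20 !subr0 => /(_ rho0') h2.
  rewrite /alx /bex; have := norm2_ge0 w; have := norm2_ge0 x; rewrite -/c0 in h.
  nra.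
have dxbd : forall x w d, norm2 w <= rho -> norm2 (dx_f f x w d) <= K1 * norm2 d.
  move=> x w d hw; rewrite /dx_f; apply: diff_lip_bound.
    have h1 : differentiable (fun z : 'cV[R]_nx => (z, w)) x.
      by apply: differentiable_pair => //; exact: differentiable_cst.
    exact: (differentiable_comp h1 (fdiff _)).
  move=> a b; have := flip a b w w hw hw; rewrite subrr norm20 addr0; exact.
have mode : forall (u : R -> 'cV[R]_m) eps (s : seq R),
    (forall t, 0 < t < T%:R -> t \notin s -> {for t, continuous u}) ->
    forall (a b al be : R) (F : R -> 'cV[R]_nx -> 'cV[R]_nx) x0' X,
    0 <= a -> b <= T%:R -> a <= b -> b <= a + 1 -> 0 <= al -> 0 <= be ->
    (forall t z, a < t < b -> norm2 (F t z) <= al + be * norm2 z) ->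
    solves_on a b (needle u v tau eps) F x0' X ->
    forall t, a <= t <= b ->
      norm2 (X t) <= expR (1 + 2 * be ^+ 2) * (norm2 x0' + 2 * al).
  move=> u eps s hs a b al be F x0' X a0 bT ab ba al0 be0 Fb [X0 [Xc Xd]] t ht.
  rewrite -X0.
  apply: (gronwall X (fun t => F t (X t)) a b al be (s ++ [:: tau - eps; tau]))
    => // z /andP[az zb]; rewrite mem_cat !inE negb_or => /andP[zs].
    rewrite negb_or => /andP[z1 z2]; apply: Xd; first by rewrite az zb.
    apply: needle_cont z1 z2; apply: hs zs.
    by rewrite (le_lt_trans a0 az) (lt_le_trans zb bT).
  by move=> _; apply: Fb; rewrite az zb.
set Ex := expR (1 + 2 * bex ^+ 2).
set Ep := expR (1 + 2 * K1 ^+ 2).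
have Ex1 : 1 <= Ex by rewrite /Ex; have := expR_ge1Dx (1 + 2 * bex ^+ 2); have := sqr_ge0 bex; lra.
have Ep1 : 1 <= Ep by rewrite /Ep; have := expR_ge1Dx (1 + 2 * K1 ^+ 2); have := sqr_ge0 K1; lra.
pose Hyp u y eps xe Psi := [/\ admissible T rho u, 0 <= eps < tau,
   hybrid_traj T f g x0 (needle u v tau eps) y xe &
   psi_pieces T f g (needle u v tau eps) v tau eps y xe Psi].
pose Claim i := exists C : R, exists D : nat, (0 <= C) /\
  (forall u y eps xe Psi, Hyp u y eps xe Psi ->
    [/\ norm2 (xe i i%:R) <= C * Pbd y i.-1 D,
        norm2 (Psi i i%:R) <= C * Pbd y i.-1 D &
        ((2 <= i)%N -> forall t : R, (i.-1)%:R <= t <= i%:R ->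
          norm2 (Psi i t) <= C * Pbd y i.-1 D)]).
have claim : forall i, (1 <= i <= T)%N -> Claim i.
  elim=> [//|i IH] /andP[_ iT].
  have T1 : 1 <= T%:R :> R by rewrite ler1n.
  case: (posnP i) => [->|ipos].
    exists (Ex * (norm2 x0 + 2 * alx) + Ep * (4 * K1 * rho)), 0%N; split.
      apply: addr_ge0; apply: mulr_ge0; try lra.
        by have := norm2_ge0 x0; lra.
      nra.
    move=> u y eps xe Psi [adm heps [hx1 hxi] [hp1 hpi]].
    have [[s [hs _]] ubd] := adm.
    move: heps => /andP[eps0 epstau].
    rewrite /Pbd big_ord0 mulr1.
    have wb : forall t, 0 <= t <= T%:R -> norm2 (needle u v tau eps t) <= rho.
      by move=> t ht; apply: needle_bound adm vrho ht.
    have hX : norm2 (xe 1%N 1%:R) <= Ex * (norm2 x0 + 2 * alx).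
      apply: (mode u eps s hs 0 1 alx bex (fun t z => f (z, needle u v tau eps t)) x0 (xe 1%N)) => //; try lra.
      - move=> t z /andP[t0 t1]; apply/fbd/wb; apply/andP; split.
          exact: ltW.
        lra.
    have hP : norm2 (Psi 1%N 1%:R) <= Ep * (4 * K1 * rho).
      set w := needle u v tau eps (tau - eps).
      set x1 := xe 1%N (tau - eps).
      have h1 : norm2 (Psi 1%N 1%:R) <= Ep * (norm2 (f (x1, v) - f (x1, w)) + 2 * 0).
        apply: (mode u eps s hs (tau - eps) 1 0 K1
           (fun t z => dx_f f (xe 1%N t) (needle u v tau eps t) z) _ (Psi 1%N)) => //; try lra.
        - move=> t z /andP[t0 t1]; rewrite add0r.
          by apply/dxbd/wb; apply/andP; split; lra.
      apply: le_trans h1 _; rewrite mulr0 addr0.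
      rewrite ler_pM2l; last by lra.
      have hw : norm2 w <= rho by apply: wb; apply/andP; split; lra.
      apply: le_trans (flip _ _ _ _ vrho hw) _.
      rewrite subrr norm20 add0r.
      have := norm2D v (- w); rewrite norm2N => h.
      nra.
    split => //.
    - apply: le_trans hX _; rewrite lerDl; apply: mulr_ge0; [lra | nra].
    - apply: le_trans hP _; rewrite lerDr; apply: mulr_ge0; first lra.
      by have := norm2_ge0 x0; lra.
  have [C [D [C0 HC]]] : Claim i by apply: IH; rewrite ipos ltnW.
  pose M := K2 + K3 * C ^+ L1 + K4 + K5 * C ^+ L1.
  have CL0 : 0 <= C ^+ L1 by apply: exprn_ge0.
  have M0 : 0 <= M by rewrite /M; have := mulr_ge0 K30 CL0; have := mulr_ge0 K50 CL0; lra.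
  pose D' := (D * L1.+1 + L2)%N.
  exists (Ex * (M + 2 * alx) + Ep * (M * C)), D'; split.
    apply: addr_ge0; apply: mulr_ge0; try lra; exact: mulr_ge0.
  move=> u y eps xe Psi H.
  have [adm heps [hx1 hxi] [hp1 hpi]] := H.
  have [hXi hPi _] := HC u y eps xe Psi H.
  have [[s [hs _]] ubd] := adm.
  move: heps => /andP[eps0 epstau].
  have wb : forall t, 0 <= t <= T%:R -> norm2 (needle u v tau eps t) <= rho.
    by move=> t ht; apply: needle_bound adm vrho ht.
  have ixT : 0 <= (i%:R : R) <= T%:R by rewrite ler0n ler_nat ltnW.
  have hi1 : ((i.+1)%:R : R) = i%:R + 1 by rewrite -natr1.
  have iT' : ((i.+1)%:R : R) <= T%:R by rewrite ler_nat.
  have [PA PB] := Pbd_step y i D L1 L2 ipos.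
  have Q1 := Pbd_ge1 y i.-1 D.
  have Gb := fun X => step_arith K2 K3 K4 K5 C (Pbd y i.-1 D) (norm2 (y i)) X L1 L2
     K20 K30 K40 K50 C0 Q1 (norm2_ge0 (y i)).
  rewrite -/M in Gb.
  move: PA PB Gb Q1.
  set Q := Pbd y i.-1 D; set P' := Pbd y i D'; set Bf := (1 + norm2 (y i)) ^+ L2.
  move=> PA PB Gb Q1.
  have ab : (i%:R : R) <= i.+1%:R by rewrite ler_nat.
  have ba : ((i.+1)%:R : R) <= i%:R + 1 by rewrite hi1.
  have ii : (1 < i.+1 <= T)%N by rewrite ltnS ipos iT.
  have wbi : forall t : R, i%:R < t < i.+1%:R -> norm2 (needle u v tau eps t) <= rho.
    move=> t /andP[t1 t2]; apply: wb; apply/andP; split.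
      exact: le_trans (ler0n _ i) (ltW t1).
    exact: le_trans (ltW t2) iT'.
  have Fbx : forall (t : R) z, i%:R < t < i.+1%:R ->
      norm2 (f (z, needle u v tau eps t)) <= alx + bex * norm2 z.
    by move=> t z ht; apply/fbd/wbi.
  have Fbp : forall (t : R) z, i%:R < t < i.+1%:R ->
      norm2 (dx_f f (xe i.+1 t) (needle u v tau eps t) z) <= 0 + K1 * norm2 z.
    by move=> t z ht; rewrite add0r; apply/dxbd/wbi.
  have tr : ((i%:R : R) <= i.+1%:R) && ((i.+1%:R : R) <= i.+1%:R) by rewrite ab lexx.
  have hx := mode u eps s hs _ _ _ _ _ _ _ (ler0n _ i) iT' ab ba alx0 bex0 Fbx
     (hxi i.+1 ii) _ tr.
  have hp := mode u eps s hs _ _ _ _ _ _ _ (ler0n _ i) iT' ab ba (lexx 0) K10 Fbp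
     (hpi i.+1 ii).
  simpl in hx, hp.
  have gpos : forall (x : 'cV[R]_nx) (yy : 'cV[R]_ny), 0 <= K2 + K3 * norm2 x ^+ L1 +
      K4 * norm2 yy ^+ L2 + K5 * norm2 x ^+ L1 * norm2 yy ^+ L2.
    by move=> x yy; apply: le_trans (norm2_ge0 _) (gbd x yy).
  have hG : norm2 (g (xe i i%:R, y i)) <= M * (Q ^+ L1 * Bf).
    exact: le_trans (gbd _ _) (Gb _ (norm2_ge0 _) hXi).
  have hdG : norm2 ('d (fun z => g (z, y i)) (xe i i%:R) (Psi i i%:R))
      <= M * (Q ^+ L1 * Bf) * (C * Q).
    apply: le_trans (dgbd _ _ _) _; apply: ler_pM => //.
      exact: norm2_ge0.
    exact: Gb (norm2_ge0 _) hXi.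
  have A1 : 1 <= Q ^+ L1 by apply: exprn_ege1.
  have B1 : 1 <= Bf by apply: exprn_ege1; have := norm2_ge0 (y i); lra.
  have [F1 F2] := @fin_arith _ _ _ _ _ _ _ _ _ _ _ _ Ex1 Ep1 M0 C0 alx0 A1 B1 (le_trans ler01 Q1) PA PB hG hdG.
  split.
  - exact: le_trans hx F1.
  - exact: le_trans (hp _ tr) F2.
  - by move=> _ t ht; exact: le_trans (hp t ht) F2.
have cl' : forall i, exists p : R * nat, (1 <= i <= T)%N ->
    (0 <= p.1) /\ (forall u y eps xe Psi, Hyp u y eps xe Psi ->
      ((2 <= i)%N -> forall t : R, (i.-1)%:R <= t <= i%:R ->
          norm2 (Psi i t) <= p.1 * Pbd y i.-1 p.2)).
  move=> i; case: (boolP ((1 <= i <= T)%N)) => hi.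
    have [C [D [C0 HC]]] := claim i hi; exists (C, D) => _; split => //.
    by move=> u y eps xe Psi H; have [_ _ H3] := HC u y eps xe Psi H.
  by exists (0, 0%N) => h; case/negP: hi.
have [pf Hpf] := choice cl'.
exists (fun i => Lseq i.-1 (pf i).2.+1),
  (fun i _ => ((pf i).1 + 1) * 2 ^+ ((pf i).2.+1 * i.-1)).
split.
  move=> i /andP[i2 iT]; have hi' : (1 <= i <= T)%N by rewrite iT (ltnW i2).
  split; first exact: Lseq_uniq.
  move=> j hj; split; first exact: Lseq_size hj.
  apply: mulr_gt0; last by apply: exprn_gt0; lra.
  by have := (Hpf i hi').1; lra.
move=> u adm _ y eps heps xe Psi hx hp i t /andP[i2 iT] ht.
have hi' : (1 <= i <= T)%N by rewrite iT (ltnW i2).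
have [C0 HC] := Hpf i hi'.
have H3 := HC u y eps xe Psi (And4 adm heps hx hp) i2 t ht.
move: H3 C0; set C := (pf i).1; set D := (pf i).2 => H3 C0.
apply: (le_trans H3).
rewrite -big_distrr /=.
have P0 : 0 <= Pbd y i.-1 D.+1 by apply: le_trans ler01 (Pbd_ge1 _ _ _).
apply: (@le_trans _ _ ((C + 1) * Pbd y i.-1 D.+1)).
  apply: ler_pM => //; first by apply: le_trans ler01 (Pbd_ge1 _ _ _).
    lra.
  exact: Pbd_mono.
rewrite -mulrA ler_wpM2l //; first lra.
exact: Pbd_poly.
Qed.
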